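(* Let ${\sf SComp}$ be the non-symmetric suboperad of ${\sf T}\mathbb{N}_3$ generated by $00$, $01$ and $02$. Then the elements of ${\sf SComp}$ are exactly the words over the alphabet $\{0,1,2\}$ that begin with $0$. Moreover, the elements of ${\sf SComp}$ of arity $n$ are in bijection with the segmented compositions of the integer $n$. Finally, ${\sf SComp}$ is isomorphic to the non-symmetric operad generated by three generators ${\tt a},{\tt b},{\tt c}$ of arity two subject to the nine relations $${\tt a}\circ_1{\tt a}={\tt a}\circ_2{\tt a},\quad {\tt b}\circ_1{\tt a}={\tt a}\circ_2{\tt b},\quad {\tt b}\circ_1{\tt b}={\tt b}\circ_2{\tt a},$$ $${\tt c}\circ_1{\tt a}={\tt a}\circ_2{\tt c},\quad {\tt c}\circ_1{\tt c}={\tt c}\circ_2{\tt a},\quad {\tt b}\circ_1{\tt c}={\tt c}\circ_2{\tt c},$$ $${\tt c}\circ_1{\tt b}={\tt b}\circ_2{\tt b},\quad {\tt a}\circ_1{\tt b}={\tt b}\circ_2{\tt c},\quad {\tt a}\circ_1{\tt c}={\tt c}\circ_2{\tt b}.$$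
   Context: Let $\mathbb{N}_3=\mathbb{Z}/3\mathbb{Z}=\{0,1,2\}$ be the additive monoid of integers modulo $3$. ${\sf T}\mathbb{N}_3=\biguplus_{n\ge1}\mathbb{N}_3^n$, elements of arity $n$ being words $x=(x_1,\dots,x_n)$ of length $n$ over $\{0,1,2\}$ (written without separators, e.g. $02=(0,2)$), with partial compositions $x\circ_i y:=(x_1,\dots,x_{i-1},x_i+y_1,\dots,x_i+y_m,x_{i+1},\dots,x_n)$ (sums modulo $3$) for $x$ of arity $n$, $y$ of arity $m$, $1\le i\le n$; it is a non-symmetric set-operad with unit $(0)$. The non-symmetric suboperad generated by a set $S$ is the smallest subset containing $S$ and the unit $(0)$ and closed under all $\circ_i$. A segmented composition of $n$ is a finite nonempty sequence of compositions (finite sequences of positive integers) whose total sum of parts is $n$; equivalently, a row of $n$ cells where each of the $n-1$ gaps between consecutive cells is either empty, a part separator, or a segment separator. A non-symmetric operad generated by generators subject to relations means the quotient of the free non-symmetric set-operad on those generators by the smallest operad congruence containing the given relations. *)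

(* Defs.v *)
From mathcomp Require Import all_boot all_algebra.
Set Implicit Arguments. Unset Strict Implicit. Unset Printing Implicit Defensive.
Import GRing.Theory.
Local Open Scope ring_scope.

(* Elements: nonempty words over Z/3Z; arity = size. *)
Definition word := seq 'Z_3.

(* Partial composition x o_i y, for 1 <= i <= size x (1-indexed as in the paper). *)
Definition pcomp (x : word) (i : nat) (y : word) : word :=
  take i.-1 x ++ map (fun a => nth 0 x i.-1 + a) y ++ drop i x.

Definition unitw : word := [:: 0].

Inductive gen_subop (S : word -> Prop) : word -> Prop :=
| gs_gen x : S x -> gen_subop S x
| gs_unit : gen_subop S unitw
| gs_comp x y i : gen_subop S x -> gen_subop S y ->
    (1 <= i <= size x)%N -> gen_subop S (pcomp x i y).

Definition SComp_gens (x : word) : Prop :=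
  x = [:: 0; 0] \/ x = [:: 0; 1] \/ x = [:: 0; 2%:R].

Definition SComp : word -> Prop := gen_subop SComp_gens.

Definition composition (c : seq nat) : bool :=
  (c != [::]) && all (fun k => 0 < k)%N c.

Definition segmented_composition (n : nat) (s : seq (seq nat)) : bool :=
  (s != [::]) && all composition s && (sumn (map sumn s) == n).

Inductive gen3 := ga | gb | gc.

Inductive tree :=
| Leaf : tree
| Node : gen3 -> tree -> tree -> tree.

Fixpoint arity (t : tree) : nat :=
  match t with
  | Leaf => 1
  | Node _ l r => arity l + arity r
  end%N.

(* grafting s on the k-th leaf (0-indexed) of t *)
Fixpoint graft0 (t : tree) (k : nat) (s : tree) : tree :=
  match t with
  | Leaf => if k == 0%N then s else Leaf
  | Node g l r =>
      if (k < arity l)%N then Node g (graft0 l k s) r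
      else Node g l (graft0 r (k - arity l) s)
  end.

Definition tcomp (t : tree) (i : nat) (s : tree) : tree := graft0 t i.-1 s.

Definition bin (g : gen3) : tree := Node g Leaf Leaf.
Definition c1 (g h : gen3) : tree := tcomp (bin g) 1 (bin h).
Definition c2 (g h : gen3) : tree := tcomp (bin g) 2 (bin h).

Inductive srel : tree -> tree -> Prop :=
| r1 : srel (c1 ga ga) (c2 ga ga)
| r2 : srel (c1 gb ga) (c2 ga gb)
| r3 : srel (c1 gb gb) (c2 gb ga)
| r4 : srel (c1 gc ga) (c2 ga gc)
| r5 : srel (c1 gc gc) (c2 gc ga)
| r6 : srel (c1 gb gc) (c2 gc gc)
| r7 : srel (c1 gc gb) (c2 gb gb)
| r8 : srel (c1 ga gb) (c2 gb gc)
| r9 : srel (c1 ga gc) (c2 gc gb).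

Inductive scong : tree -> tree -> Prop :=
| sc_rel t u : srel t u -> scong t u
| sc_refl t : scong t t
| sc_sym t u : scong t u -> scong u t
| sc_trans t u v : scong t u -> scong u v -> scong t v
| sc_compl t t' i s : scong t t' -> (1 <= i <= arity t)%N ->
    scong (tcomp t i s) (tcomp t' i s)
| sc_compr t i s s' : scong s s' -> (1 <= i <= arity t)%N ->
    scong (tcomp t i s) (tcomp t i s').

(* An isomorphism from the quotient operad tree/scong onto SComp, presented as a
   map phi from the free operad that is an operad morphism (unit, compositions,
   arity), whose kernel is exactly scong and whose image is exactly SComp. *)
Definition presents_SComp (phi : tree -> word) : Prop :=
  [/\ phi Leaf = unitw,
      (forall t i s, (1 <= i <= arity t)%N ->
         phi (tcomp t i s) = pcomp (phi t) i (phi s)),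
      (forall t, size (phi t) = arity t),
      (forall t u, phi t = phi u <-> scong t u)
    & (forall x, SComp x <-> exists t, phi t = x)].

(* Main.v *)
Require Import Defs.
From mathcomp Require Import all_boot all_algebra.
From Stdlib Require Import ProofIrrelevance.
From mathcomp Require Import zify.
Set Implicit Arguments. Unset Strict Implicit. Unset Printing Implicit Defensive.
Import GRing.Theory.
Local Open Scope ring_scope.

Lemma zcase (a : 'Z_3) : a = 0 \/ a = 1 \/ a = 2%:R.
Proof.
case: a => [[|[|[|m]]] Hm].
- by left; apply/val_inj.
- by right; left; apply/val_inj.
- by right; right; apply/val_inj.
- by [].
Qed.

Lemma SComp_head x : SComp x -> exists w, x = 0 :: w.
Proof.
elim => {x} [x [->|[->|->]]| |x y i _ [w ->] _ [v ->]].
- by exists [:: 0].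
- by exists [:: 1].
- by exists [:: 2%:R].
- by exists [::].
case: i => [|[|i]] //= _.
- rewrite /Defs.pcomp /=; eexists; congr (_ :: _); by apply/val_inj.
- rewrite /Defs.pcomp /=; eexists; reflexivity.
Qed.

Lemma SComp_all w : SComp (0 :: w).
Proof.
move: {2}(size w) (leqnn (size w)) => n; elim: n w => [|n IH] [|a w] //=.
- by move=> _; apply: gs_unit.
- by move=> _; apply: gs_unit.
move=> Hs.
have -> : 0 :: a :: w = Defs.pcomp [:: 0; a] 2 (0 :: map (fun b => b - a) w).
  rewrite /Defs.pcomp /= addr0 cats0 -map_comp; congr (_ :: _ :: _).
  by rewrite -[LHS]map_id; apply: eq_map => b /=; rewrite addrC subrK.
apply: gs_comp => //.
- by apply: gs_gen; rewrite /SComp_gens; case: (zcase a) => [->|[->|->]]; auto.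
- by apply: IH; rewrite size_map.
Qed.

Lemma part1 (x : word) : SComp x <-> (exists w, x = 0 :: w).
Proof. by split; [apply: SComp_head | case=> w ->; apply: SComp_all]. Qed.

Definition z2 : 'Z_3 := 2%:R.

Fixpoint dec (w : seq 'Z_3) : seq (seq nat) :=
  match w with
  | [::] => [:: [:: 1%N]]
  | g :: w' =>
    let s := dec w' in
    match val g with
    | 0%N => match s with (k :: c) :: s' => (k.+1 :: c) :: s' | _ => s end
    | 1%N => match s with c :: s' => (1%N :: c) :: s' | _ => s end
    | _ => [:: 1%N] :: s
    end
  end.

Fixpoint encc (c : seq nat) : seq 'Z_3 :=
  match c with
  | [::] => [::]
  | [:: k] => nseq k.-1 0
  | k :: c' => nseq k.-1 0 ++ 1 :: encc c'
  end.

Fixpoint enc (s : seq (seq nat)) : seq 'Z_3 :=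
  match s with
  | [::] => [::]
  | [:: c] => encc c
  | c :: s' => encc c ++ z2 :: enc s'
  end.

Lemma dec_inv w : exists k c s, dec w = (k.+1 :: c) :: s.
Proof.
elim: w => [|g w [k [c [s IH]]]] /=; first by exists 0%N, [::], [::].
rewrite IH; case: (val g) => [|[|m]].
- by exists k.+1, c, s.
- by exists 0%N, (k.+1 :: c), s.
- by exists 0%N, [::], ((k.+1 :: c) :: s).
Qed.

Lemma dec_valid w : all composition (dec w) && (sumn (map sumn (dec w)) == (size w).+1).
Proof.
elim: w => [|g w] //=; case: (dec_inv w) => k [c [s ->]] /= /andP[/andP[Hc Hs] /eqP Hsum].
case: (val g) => [|[|m]] /=; apply/andP; split; rewrite ?Hs ?andbT //; apply/eqP; lia.
Qed.

Lemma size_nseq0 (n : nat) : size (nseq n (0 : 'Z_3)) = n. Proof. by rewrite size_nseq. Qed.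

Lemma dec_nseq m u k c s : dec u = (k :: c) :: s ->
  dec (nseq m 0 ++ u) = ((k + m)%N :: c) :: s.
Proof. by move=> H; elim: m => [|m IH] /=; rewrite ?addn0 ?IH ?addnS. Qed.

Lemma dec_one u k c s : dec u = (k :: c) :: s -> dec (1 :: u) = (1%N :: k :: c) :: s.
Proof. by move=> /= ->. Qed.

Lemma dec_two u : dec (z2 :: u) = [:: 1%N] :: dec u.
Proof. by []. Qed.

Lemma dec_encc k c u s : all (fun k => 0 < k)%N (k :: c) -> dec u = [:: 1%N] :: s ->
  dec (encc (k :: c) ++ u) = (k :: c) :: s.
Proof.
move=> + Hu; elim: c k => [|k2 c IH] k /=.
- by rewrite andbT => Hk; rewrite (dec_nseq _ Hu) add1n prednK.
- case/andP => Hk Hc; rewrite -catA cat_cons.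
  have H2 := dec_one (IH k2 Hc).
  by rewrite (dec_nseq _ H2) add1n prednK.
Qed.

Lemma dec_enc s : all composition s -> s != [::] -> dec (enc s) = s.
Proof.
elim: s => [|c s IH] //= /andP[Hc Hs] _.
case: c Hc => [|k c] //; rewrite /composition /= => Hc.
case: s IH Hs => [|c2 s] IH Hs.
- move: (dec_encc (u := [::]) (s := [::]) Hc erefl); rewrite cats0 => -> //.
- change (dec (encc (k :: c) ++ z2 :: enc (c2 :: s)) = [:: k :: c, c2 & s]).
  by rewrite (dec_encc (s := c2 :: s)) // dec_two IH.
Qed.

Lemma enc0 k c s : enc ((k.+2 :: c) :: s) = 0 :: enc ((k.+1 :: c) :: s).
Proof. by case: c => [|? ?]; case: s. Qed.
Lemma enc1 k c s : enc ((1%N :: k.+1 :: c) :: s) = 1 :: enc ((k.+1 :: c) :: s).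
Proof. by case: c => [|? ?]; case: s. Qed.
Lemma enc2 x s : enc ([:: 1%N] :: x :: s) = z2 :: enc (x :: s).
Proof. by []. Qed.

Lemma enc_dec w : enc (dec w) = w.
Proof.
elim: w => [|g w IH] //=.
case: (dec_inv w) IH => k [c [s E]]; rewrite E => IH.
case: (zcase g) => [->|[->|->]].
- by change (enc ((k.+2::c)::s) = 0::w); rewrite enc0 IH.
- by change (enc ((1%N :: k.+1::c)::s) = 1::w); rewrite enc1 IH.
- by change (enc ([:: 1%N] :: (k.+1::c)::s) = z2::w); rewrite enc2 IH.
Qed.

Lemma dec_seg w : segmented_composition (size w).+1 (dec w).
Proof.
rewrite /segmented_composition; case: (dec_inv w) => k [c [s E]].
by rewrite -andbA; apply/andP; split; [rewrite E | apply: dec_valid].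
Qed.

Lemma part2 (n : nat) :
  exists f : {x : word | SComp x /\ size x = n} ->
             {s : seq (seq nat) | segmented_composition n s}, bijective f.
Proof.
have Hf (x : {x : word | SComp x /\ size x = n}) :
    segmented_composition n (dec (behead (sval x))).
  case: x => x [Hx Hn] /=; rewrite -Hn; case: (SComp_head Hx) => w -> /=; exact: dec_seg.
have Hg (s : {s : seq (seq nat) | segmented_composition n s}) :
    SComp (0 :: enc (val s)) /\ size (0 :: enc (val s)) = n.
  case: s => s /= /andP[/andP[Hne Hall] /eqP Hsum]; split; first exact: SComp_all.
  have := dec_valid (enc s); rewrite dec_enc // => /andP[_ /eqP]; rewrite Hsum /=.
  by move=> ->.
exists (fun x => exist (fun s => segmented_composition n s) _ (Hf x)); exists (fun s => exist (fun x : word => SComp x /\ size x = n) _ (Hg s)).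
- case=> x [Hx Hs]; apply: eq_sig_hprop => /=; first by move=> *; apply: proof_irrelevance.
  by case: (SComp_head Hx) => w E; rewrite {2}E E /= enc_dec.
- case=> s Hs; apply: eq_sig_hprop => /=; first by move=> *; apply: proof_irrelevance.
  by case/andP: Hs => /andP[Hne Hall] _; rewrite dec_enc.
Qed.

Definition gv (g : gen3) : 'Z_3 := match g with ga => 0 | gb => 1 | gc => 2%:R end.

Fixpoint phi (t : tree) : word :=
  match t with
  | Leaf => [:: 0]
  | Node g l r => phi l ++ map (fun a => a + gv g) (phi r)
  end.

Lemma size_phi t : size (phi t) = arity t.
Proof. by elim: t => //= g l IHl r IHr; rewrite size_cat size_map IHl IHr. Qed.

Lemma arity_pos t : (0 < arity t)%N.
Proof. elim: t => //= g l IHl r _; lia. Qed.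

Lemma phi_head t : exists w, phi t = 0 :: w.
Proof. elim: t => [|g l [w E] r _]; first by eexists. by rewrite /= E; eexists. Qed.

Lemma pcomp_catl (L R S : word) k : (k < size L)%N ->
  Defs.pcomp (L ++ R) k.+1 S = Defs.pcomp L k.+1 S ++ R.
Proof.
move=> Hk; rewrite /Defs.pcomp /= take_cat nth_cat drop_cat Hk.
rewrite -!catA; case: ltnP => H //.
have -> : k.+1 = size L by apply/eqP; rewrite eqn_leq H Hk.
by rewrite subnn drop0 drop_size.
Qed.

Lemma pcomp_catr (L R S : word) k : (size L <= k)%N ->
  Defs.pcomp (L ++ R) k.+1 S = L ++ Defs.pcomp R (k - size L).+1 S.
Proof.
move=> Hk; rewrite /Defs.pcomp /= take_cat nth_cat drop_cat.
rewrite ltnNge Hk /= ltnNge (leq_trans Hk (leqnSn k)) /= -!catA; congr (_ ++ _).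
by rewrite subSn.
Qed.

Lemma pcomp_map (R S : word) (g : 'Z_3) j : (j < size R)%N ->
  map (fun a => a + g) (Defs.pcomp R j.+1 S) = Defs.pcomp (map (fun a => a + g) R) j.+1 S.
Proof.
move=> Hj; rewrite /Defs.pcomp /= !map_cat map_take map_drop -map_comp (nth_map 0) //.
congr (_ ++ _ ++ _); apply: eq_map => a /=; rewrite -!addrA; congr (_ + _); exact: addrC.
Qed.

Lemma phi_graft t k s : (k < arity t)%N ->
  phi (graft0 t k s) = Defs.pcomp (phi t) k.+1 (phi s).
Proof.
elim: t k => [|g l IHl r IHr] k.
- case: k => [|k] H; last by [].
  change (phi s = [seq 0 + a | a <- phi s] ++ [::]).
  rewrite cats0. 
  under eq_map do rewrite add0r. 
  by rewrite map_id.
- move=> Hk /=; case: ifP => Hl.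
  + by rewrite /= IHl // pcomp_catl ?size_phi.
  + have Hk' : (k - arity l < arity r)%N by move: Hk => /=; lia.
    rewrite /= pcomp_catr; last by rewrite size_phi leqNgt Hl.
    rewrite IHr // size_phi pcomp_map ?size_phi //.
Qed.

Lemma phi_tcomp t i s : (1 <= i <= arity t)%N ->
  phi (tcomp t i s) = Defs.pcomp (phi t) i (phi s).
Proof. case: i => // i /andP[_ H]; exact: phi_graft. Qed.

Lemma srel_phi t u : srel t u -> phi t = phi u.
Proof. by case; apply/eqP. Qed.

Lemma scong_phi t u : scong t u -> phi t = phi u.
Proof.
elim => {t u} //.
- exact: srel_phi.
- by move=> t u v _ -> _ ->.
- move=> t t' i s _ E H; rewrite !phi_tcomp ?E //.
  by rewrite -!size_phi -E size_phi.
- by move=> t i s s' _ E H; rewrite !phi_tcomp ?E.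
Qed.

Definition rot1 x y := match x, y with
  | ga, ga => ga | ga, gb => gb | gb, ga => gb | ga, gc => gc | gc, ga => gc
  | gc, gc => gb | gb, gb => gc | gb, gc => ga | gc, gb => ga end.
Definition rot2 x y := match x, y with
  | ga, ga => ga | ga, gb => ga | gb, ga => gb | ga, gc => ga | gc, ga => gc
  | gc, gc => gc | gb, gb => gb | gb, gc => gb | gc, gb => gc end.

Lemma rot_rel x y : scong (c2 x y) (c1 (rot1 x y) (rot2 x y)).
Proof.
by case: x; case: y; apply: sc_sym; apply: sc_rel; constructor.
Qed.

Lemma rotate x y L M R :
  scong (Node x L (Node y M R)) (Node (rot1 x y) (Node (rot2 x y) L M) R).
Proof.
have H0 := rot_rel x y.
have H1 := sc_compl R H0 (isT : (1 <= 3 <= arity (c2 x y))%N).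
have H2 : scong (tcomp (tcomp (c2 x y) 3 R) 2 M)
                (tcomp (tcomp (c1 (rot1 x y) (rot2 x y)) 3 R) 2 M).
  apply: sc_compl H1 _; rewrite /=; have := arity_pos R; lia.
have H3 : scong (tcomp (tcomp (tcomp (c2 x y) 3 R) 2 M) 1 L)
                (tcomp (tcomp (tcomp (c1 (rot1 x y) (rot2 x y)) 3 R) 2 M) 1 L).
  by apply: sc_compl H2 _; rewrite arity_pos.
exact: H3.
Qed.

Lemma node_congl g l l' r : scong l l' -> scong (Node g l r) (Node g l' r).
Proof.
move=> H; exact: (@sc_compr (Node g Leaf r) 1 l l' H).
Qed.

Lemma node_congr g l r r' : scong r r' -> scong (Node g l r) (Node g l r').
Proof.
move=> H.
have E s : tcomp (Node g l Leaf) (arity l).+1 s = Node g l s.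
  by rewrite /tcomp /= ltnn subnn.
have := @sc_compr (Node g l Leaf) (arity l).+1 r r' H; rewrite !E; apply.
have := arity_pos l; rewrite /=; lia.
Qed.

Fixpoint lcr (q : seq gen3) : tree :=
  match q with [::] => Leaf | h :: q => Node h (lcr q) Leaf end.

Lemma lemJ q g p : exists p', scong (Node g (lcr p) (lcr q)) (lcr p').
Proof.
elim: q g p => [|h q IH] g p /=.
- by exists (g :: p); apply: sc_refl.
- case: (IH (rot2 g h) p) => p' Hp'.
  exists (rot1 g h :: p'); apply: sc_trans (rotate _ _ _ _ _) _.
  exact: node_congl.
Qed.

Lemma tnorm t : exists p, scong t (lcr p).
Proof.
elim: t => [|g l [p Hl] r [q Hr]]; first by exists [::]; apply: sc_refl.
case: (lemJ q g p) => p' H; exists p'.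
apply: sc_trans H; apply: sc_trans (node_congl _ _ Hl); exact: node_congr.
Qed.

Lemma phi_lcr q : phi (lcr q) = 0 :: rev (map gv q).
Proof.
elim: q => [|h q IH] //=; rewrite IH /= add0r rev_cons -cats1; done.
Qed.

Lemma gv_inj : injective gv.
Proof. by case; case => // /(congr1 val). Qed.

Lemma phi_kernel t u : phi t = phi u <-> scong t u.
Proof.
split; last exact: scong_phi.
case: (tnorm t) => p Hp; case: (tnorm u) => q Hq E.
have : phi (lcr p) = phi (lcr q) by rewrite -(scong_phi Hp) -(scong_phi Hq).
rewrite !phi_lcr => -[] /(congr1 rev); rewrite !revK => /(inj_map gv_inj) Epq; subst q.
by apply: sc_trans Hp _; apply: sc_sym.
Qed.

Definition ginv (z : 'Z_3) : gen3 := match val z with 0%N => ga | 1%N => gb | _ => gc end.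

Lemma gvK z : gv (ginv z) = z.
Proof. by case: (zcase z) => [->|[->|->]]. Qed.

Lemma phi_image x : SComp x <-> exists t, phi t = x.
Proof.
split.
- case/SComp_head => w ->; exists (lcr (rev (map ginv w))).
  rewrite phi_lcr map_rev revK -map_comp; congr (_ :: _).
  by rewrite -[RHS]map_id; apply: eq_map => z /=; rewrite gvK.
- case=> t <-; case: (phi_head t) => w ->; exact: SComp_all.
Qed.

Lemma part3 : exists phi : tree -> word, presents_SComp phi.
Proof.
exists phi; split => //.
- exact: phi_tcomp.
- exact: size_phi.
- exact: phi_kernel.
- exact: phi_image.
Qed.

Theorem mainTheorem8 :
  (forall x : word, SComp x <-> (exists w, x = 0 :: w))
  /\ (forall n : nat,
        exists f : {x : word | SComp x /\ size x = n} ->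
                   {s : seq (seq nat) | segmented_composition n s},
          bijective f)
  /\ (exists phi : tree -> word, presents_SComp phi).
Proof.
split; first exact: part1.
split; first exact: part2.
exact: part3.
Qed.
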